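(* Let $\mathfrak{W}$ be the Witt algebra and let $\bigwedge^2\mathfrak{W}$ carry the $\mathfrak{W}$-module structure induced by the adjoint action. Then the first Chevalley–Eilenberg cohomology vanishes: $$H^1\big(\mathfrak{W},\textstyle\bigwedge^2\mathfrak{W}\big)=\{0\}.$$ Equivalently: for every linear map $\delta:\mathfrak{W}\to\bigwedge^2\mathfrak{W}$ satisfying $$\delta([x,y]) = x\cdot\delta(y) - y\cdot\delta(x)\quad\text{for all } x,y\in\mathfrak{W},$$ there exists $r\in\bigwedge^2\mathfrak{W}$ such that $\delta(x)=x\cdot r$ for all $x\in\mathfrak{W}$.
   Context: The Witt algebra $\mathfrak{W}$ is the complex Lie algebra with basis $\{L_m : m\in\mathbb{Z}\}$ (elements are finite linear combinations) and bracket $[L_m,L_n]=(m-n)L_{m+n}$. The exterior square $\bigwedge^2\mathfrak{W}$ (finite sums of elements $a\wedge b = a\otimes b - b\otimes a$) is a $\mathfrak{W}$-module via $x\cdot(a\wedge b)=[x,a]\wedge b + a\wedge[x,b]$, i.e. $x\cdot t=[x\otimes 1+1\otimes x,\,t]$. A 1-cocycle is a linear map $\delta:\mathfrak{W}\to\bigwedge^2\mathfrak{W}$ with $\delta([x,y])=x\cdot\delta(y)-y\cdot\delta(x)$; a 1-coboundary is a map of the form $x\mapsto x\cdot r$ for a fixed $r\in\bigwedge^2\mathfrak{W}$; $H^1$ is the quotient of 1-cocycles by 1-coboundaries. *)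

(* Defs.v *)
From HB Require Import structures.
From mathcomp Require Import all_boot all_order all_algebra.
From mathcomp Require Import finmap.
From mathcomp Require Import monalg.
From mathcomp Require Import complex.
From mathcomp Require Import Rstruct.

Set Implicit Arguments.
Unset Strict Implicit.
Unset Printing Implicit Defensive.

Import GRing.Theory.
Local Open Scope ring_scope.

Definition CC : fieldType := complex Rdefinitions.R.

(* The Witt algebra as a vector space: finite C-linear combinations of the
   basis vectors L_m, m in Z (finitely supported functions Z -> C). *)
Definition Witt := {malg CC[int]}.

(* W (x) W : finite linear combinations of L_m (x) L_n. *)
Definition Tens := {malg CC[(int * int)%type]}.

Definition L (m : int) : Witt := << m >>.

Definition bracket (x y : Witt) : Witt :=
  \sum_(m <- msupp x) \sum_(n <- msupp y)
     ((x@_m * y@_n) * (m - n)%:~R) *: L (m + n).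

Definition tensor (a b : Witt) : Tens :=
  \sum_(m <- msupp a) \sum_(n <- msupp b) << (a@_m * b@_n) *g (m, n) >>.

Definition wedge (a b : Witt) : Tens := tensor a b - tensor b a.

Definition in_ext2 (t : Tens) : Prop :=
  exists s : seq (Witt * Witt), t = \sum_(p <- s) wedge p.1 p.2.

(* The W-action x . t = [x (x) 1 + 1 (x) x, t], i.e. the linear extension of
   x . (a (x) b) = [x,a] (x) b + a (x) [x,b]. *)
Definition act (x : Witt) (t : Tens) : Tens :=
  \sum_(p <- msupp t)
     t@_p *: (tensor (bracket x (L p.1)) (L p.2)
              + tensor (L p.1) (bracket x (L p.2))).

(* Main.v *)
Require Import Defs.
From HB Require Import structures.
From mathcomp Require Import all_boot all_order all_algebra.
From mathcomp Require Import finmap monalg complex Rstruct.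
From mathcomp Require Import ring lra zify.
Set Implicit Arguments. Unset Strict Implicit. Unset Printing Implicit Defensive.
Import GRing.Theory Num.Theory.
Local Open Scope ring_scope.

Notation Fn := (int * int -> CC).

Definition Aop (m : int) (f : Fn) (p : int * int) : CC :=
  (2 * m - p.1)%:~R * f (p.1 - m, p.2) + (2 * m - p.2)%:~R * f (p.1, p.2 - m).

Definition antis (f : Fn) := forall i j, f (i, j) = - f (j, i).
Definition homog (d : int) (f : Fn) := forall p : int * int, p.1 + p.2 != d -> f p = 0.
Definition cocyc (D : int -> Fn) := forall (m n : int) p,
  (m - n)%:~R * D (m + n) p = Aop m (D n) p - Aop n (D m) p.

Lemma intr_neq0 (k : int) : k != 0 -> (k%:~R : CC) != 0.
Proof. by rewrite intr_eq0. Qed.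

Lemma mulIz (k : int) (x : CC) : k != 0 -> k%:~R * x = 0 -> x = 0.
Proof. by move=> /intr_neq0 hk /eqP; rewrite mulf_eq0 (negbTE hk) /= => /eqP. Qed.

Lemma antis_diag (f : Fn) i : antis f -> f (i, i) = 0.
Proof.
move=> H; have := H i i => E.
apply: (@mulIz 2) => //; rewrite -[2%:~R]/(1 + 1 : CC) mulrDl mul1r {1}E; ring.
Qed.

Lemma Aop_ext m (f g : Fn) p : (forall q, f q = g q) -> Aop m f p = Aop m g p.
Proof. by move=> H; rewrite /Aop !H. Qed.

Lemma AopB m (f g : Fn) p : Aop m (fun q => f q - g q) p = Aop m f p - Aop m g p.
Proof. rewrite /Aop; ring. Qed.

Lemma AopD m (f g : Fn) p : Aop m (fun q => f q + g q) p = Aop m f p + Aop m g p.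
Proof. rewrite /Aop; ring. Qed.

Lemma Aop0 (f : Fn) p : Aop 0 f p = - (p.1 + p.2)%:~R * f p.
Proof.
case: p => i j; rewrite /Aop /= !subr0 mulr0 sub0r; ring.
Qed.

Lemma Aop_comm m n (f : Fn) p :
  Aop m (Aop n f) p - Aop n (Aop m f) p = (m - n)%:~R * Aop (m + n) f p.
Proof.
case: p => i j; rewrite /Aop /=.
have -> : i - m - n = i - (m + n) by lia.
have -> : i - n - m = i - (m + n) by lia.
have -> : j - m - n = j - (m + n) by lia.
have -> : j - n - m = j - (m + n) by lia.
move: (f (i - (m + n), j)) (f (i - m, j - n)) (f (i - n, j - m)) (f (i, j - (m + n))) => a b c d.
ring.
Qed.

Lemma cocyc_cob (R : Fn) : cocyc (fun m => Aop m R).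
Proof. by move=> m n p; rewrite Aop_comm addrC. Qed.

Lemma cocycB (D E : int -> Fn) : cocyc D -> cocyc E -> cocyc (fun m p => D m p - E m p).
Proof.
move=> HD HE m n p /=; rewrite !AopB mulrBr HD HE; ring.
Qed.

Lemma antisB (f g : Fn) : antis f -> antis g -> antis (fun q => f q - g q).
Proof. by move=> Hf Hg i j /=; rewrite Hf Hg opprB opprK addrC. Qed.

Lemma antisD (f g : Fn) : antis f -> antis g -> antis (fun q => f q + g q).
Proof. by move=> Hf Hg i j /=; rewrite Hf Hg opprD. Qed.

Lemma antisA m (f : Fn) : antis f -> antis (Aop m f).
Proof. by move=> Hf i j; rewrite /Aop /= Hf (Hf i); ring. Qed.

Lemma cocyc_homog (D : int -> Fn) : cocyc D -> (forall p, D 0 p = 0) ->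
  forall m, homog m (D m).
Proof.
move=> HC H0 m [i j] /= hij.
have := HC m 0 (i, j); rewrite !subr0 ?addr0 Aop0 /=.
rewrite (@Aop_ext m (D 0) (fun _ => 0)) // /Aop mulr0 mulr0 addr0 sub0r => E.
apply: (@mulIz (m - (i + j))); first by rewrite subr_eq0 eq_sym.
rewrite intrB mulrBl E; ring.
Qed.

Lemma int_ind_up (P : int -> Prop) (k : int) :
  P k -> (forall i, k < i -> P (i - 1) -> P i) -> forall i, k <= i -> P i.
Proof.
move=> Pk Hs i ki.
have [n ->] : exists n : nat, i = k + n%:Z.
  by exists `|i - k|%N; lia.
elim: n => [|n IH]; first by rewrite addr0.
have := Hs (k + n.+1%:Z); rewrite (_ : k + n.+1%:Z - 1 = k + n%:Z); last by lia.
by apply=> //; lia.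
Qed.

Lemma mirror_zero (f : Fn) (d k0 : int) : antis f -> homog d f ->
  (forall i, k0 <= i -> f (i, d - i) = 0) -> 2 * k0 <= d + 1 -> forall p, f p = 0.
Proof.
move=> Ha Hh Hu hk [i j].
have [/eqP hij|hij] := boolP (i + j == d); last by rewrite Hh.
have -> : j = d - i by lia.
have [ki|ki] := boolP (k0 <= i); first by rewrite Hu.
rewrite Ha (_ : i = d - (d - i)); last by lia.
rewrite (_ : d - (d - (d - i)) = d - i); last by lia.
by rewrite Hu ?oppr0 //; lia.
Qed.

Lemma fpt (f : Fn) (a b a' b' : int) : a = a' -> b = b' -> f (a, b) = f (a', b').
Proof. by move=> -> ->. Qed.

Ltac fix_pt f a b a' b' := rewrite (@fpt f a b a' b'); [| by lia | by lia].

Lemma K1 (f : Fn) : antis f -> homog 0 f -> (forall p, Aop 1 f p = 0) -> forall p, f p = 0.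
Proof.
move=> Ha Hh HA; apply: (@mirror_zero f 0 0) => //.
apply: int_ind_up; first by rewrite subr0 antis_diag.
move=> i hi IH; have := HA (i, 1 - i); rewrite /Aop /=.
fix_pt f (i - 1) (1 - i) (i - 1) (0 - (i - 1)); rewrite IH mulr0 add0r.
fix_pt f i (1 - i - 1) i (0 - i).
by apply: mulIz; lia.
Qed.

Lemma K3 (f : Fn) : antis f -> homog 2 f -> (forall p, Aop (-1) f p = 0) -> forall p, f p = 0.
Proof.
move=> Ha Hh HA; apply: (@mirror_zero f 2 1) => //.
apply: int_ind_up; first by rewrite (_ : 2 - 1 = 1) // antis_diag.
move=> i hi IH; have := HA (i - 1, 2 - i); rewrite /Aop /=.
fix_pt f (i - 1) (2 - i - -1) (i - 1) (2 - (i - 1)); rewrite IH mulr0 addr0.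
fix_pt f (i - 1 - -1) (2 - i) i (2 - i).
by apply: mulIz; lia.
Qed.

Lemma K4 (f : Fn) : antis f -> homog (-2) f -> (forall p, Aop 1 f p = 0) -> forall p, f p = 0.
Proof.
move=> Ha Hh HA; apply: (@mirror_zero f (-2) (-1)) => //.
apply: int_ind_up; first by rewrite (_ : -2 - -1 = -1) // antis_diag.
move=> i hi IH; have := HA (i, -1 - i); rewrite /Aop /=.
fix_pt f (i - 1) (-1 - i) (i - 1) (-2 - (i - 1)); rewrite IH mulr0 add0r.
fix_pt f i (-1 - i - 1) i (-2 - i).
by apply: mulIz; lia.
Qed.

(* degree -1 : kernel is one dimensional *)
Lemma K2a (f : Fn) : (forall p, Aop 1 f p = 0) -> forall i, 2 <= i -> f (i, -1 - i) = 0.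
Proof.
move=> HA; apply: int_ind_up.
  have := HA (2, -2); rewrite /Aop /=.
  fix_pt f (2:int) (-2 - 1 : int) (2:int) (-1 - 2 : int).
  rewrite (_ : (((2 * 1 - 2 : int)%:~R) : CC) = 0) ?mul0r ?add0r; last by rewrite mulr1 subrr.
  by apply: mulIz.
move=> i hi IH; have := HA (i, - i); rewrite /Aop /=.
fix_pt f (i - 1) (- i) (i - 1) (-1 - (i - 1)); rewrite IH mulr0 add0r.
fix_pt f i (- i - 1) i (-1 - i).
by apply: mulIz; lia.
Qed.

Lemma K2 (f : Fn) : antis f -> homog (-1) f -> (forall p, Aop 1 f p = 0) -> f (1, -2) = 0 ->
  forall p, f p = 0.
Proof.
move=> Ha Hh HA h1; apply: (@mirror_zero f (-1) 0) => //.
apply: int_ind_up.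
  have := HA (1, -1); rewrite /Aop /=.
  fix_pt f (1 - 1 : int) (-1 : int) (0:int) (-1 - 0 : int).
  fix_pt f (1:int) (-1 - 1 : int) (1:int) (-2:int); rewrite h1 mulr0 addr0.
  by apply: mulIz.
move=> i hi IH; have := HA (i, - i); rewrite /Aop /=.
fix_pt f (i - 1) (- i) (i - 1) (-1 - (i - 1)); rewrite IH mulr0 add0r.
fix_pt f i (- i - 1) i (-1 - i).
by apply: mulIz; lia.
Qed.

Lemma Aop_zero m (f : Fn) p : (forall q, f q = 0) -> Aop m f p = 0.
Proof. by move=> H; rewrite /Aop !H !mulr0 addr0. Qed.

Lemma deg0_zero (e : int -> Fn) : cocyc e -> (forall m, antis (e m)) ->
  (forall p, e 0 p = 0) -> (forall p, e 1 p = 0) -> forall m p, e m p = 0.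
Proof.
move=> HC Ha H0 H1.
have Hh := cocyc_homog HC H0.
have A1m : forall p, Aop 1 (e (-1)) p = 0.
  move=> p; have E : (1 - -1)%:~R * e 0 p = Aop 1 (e (-1)) p - Aop (-1) (e 1) p := HC 1 (-1) p.
  by move: E; rewrite H0 mulr0 (Aop_zero _ _ H1) subr0.
have z2 : e (-1) (2, -3) = 0 := @K2a (e (-1)) A1m 2 isT.
have z3 : e (-1) (3, -4) = 0 := @K2a (e (-1)) A1m 3 isT.
have z4 : e (-1) (4, -5) = 0 := @K2a (e (-1)) A1m 4 isT.
have z5 : e (-1) (5, -6) = 0 := @K2a (e (-1)) A1m 5 isT.
have z6 : e (-1) (6, -7) = 0 := @K2a (e (-1)) A1m 6 isT.
have E1 : (3)%:~R * e (1) (3, -2) = ((1)%:~R * e (-1) (1, -2) + (6)%:~R * e (-1) (3, -4)) - ((-5)%:~R * e (2) (4, -2) + (0)%:~R * e (2) (3, -1)) := HC (2) (-1) (3, -2).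
have E2 : (3)%:~R * e (1) (4, -3) = ((0)%:~R * e (-1) (2, -3) + (7)%:~R * e (-1) (4, -5)) - ((-6)%:~R * e (2) (5, -3) + (1)%:~R * e (2) (4, -2)) := HC (2) (-1) (4, -3).
have E3 : (3)%:~R * e (1) (6, -5) = ((-2)%:~R * e (-1) (4, -5) + (9)%:~R * e (-1) (6, -7)) - ((-8)%:~R * e (2) (7, -5) + (3)%:~R * e (2) (6, -4)) := HC (2) (-1) (6, -5).
have E4 : (3)%:~R * e (-1) (2, -3) = ((0)%:~R * e (-2) (1, -3) + (5)%:~R * e (-2) (2, -4)) - ((-6)%:~R * e (1) (4, -3) + (-1)%:~R * e (1) (2, -1)) := HC (1) (-2) (2, -3).
have E5 : (3)%:~R * e (-1) (3, -4) = ((-1)%:~R * e (-2) (2, -4) + (6)%:~R * e (-2) (3, -5)) - ((-7)%:~R * e (1) (5, -4) + (0)%:~R * e (1) (3, -2)) := HC (1) (-2) (3, -4).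
have E6 : (3)%:~R * e (-1) (5, -6) = ((-3)%:~R * e (-2) (4, -6) + (8)%:~R * e (-2) (5, -7)) - ((-9)%:~R * e (1) (7, -6) + (2)%:~R * e (1) (5, -4)) := HC (1) (-2) (5, -6).
have E7 : (4)%:~R * e (0) (4, -4) = ((0)%:~R * e (-2) (2, -4) + (8)%:~R * e (-2) (4, -6)) - ((-8)%:~R * e (2) (6, -4) + (0)%:~R * e (2) (4, -2)) := HC (2) (-2) (4, -4).
have E8 : (4)%:~R * e (0) (5, -5) = ((-1)%:~R * e (-2) (3, -5) + (9)%:~R * e (-2) (5, -7)) - ((-9)%:~R * e (2) (7, -5) + (1)%:~R * e (2) (5, -3)) := HC (2) (-2) (5, -5).
have key : (32)%:~R * e (-1) (1, -2) = (-32)%:~R * ((3)%:~R * e (1) (3, -2) - (((1)%:~R * e (-1) (1, -2) + (6)%:~R * e (-1) (3, -4)) - ((-5)%:~R * e (2) (4, -2) + (0)%:~R * e (2) (3, -1)))) + (-160)%:~R * ((3)%:~R * e (1) (4, -3) - (((0)%:~R * e (-1) (2, -3) + (7)%:~R * e (-1) (4, -5)) - ((-6)%:~R * e (2) (5, -3) + (1)%:~R * e (2) (4, -2)))) + (1080)%:~R * ((3)%:~R * e (1) (6, -5) - (((-2)%:~R * e (-1) (4, -5) + (9)%:~R * e (-1) (6, -7)) - ((-8)%:~R * e (2) (7, -5) + (3)%:~R * e (2) (6, -4)))) + (-32)%:~R * ((3)%:~R * e (-1) (2, -3) - (((0)%:~R * e (-2) (1, -3) + (5)%:~R * e (-2)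 (2, -4)) - ((-6)%:~R * e (1) (4, -3) + (-1)%:~R * e (1) (2, -1)))) + (-160)%:~R * ((3)%:~R * e (-1) (3, -4) - (((-1)%:~R * e (-2) (2, -4) + (6)%:~R * e (-2) (3, -5)) - ((-7)%:~R * e (1) (5, -4) + (0)%:~R * e (1) (3, -2)))) + (1080)%:~R * ((3)%:~R * e (-1) (5, -6) - (((-3)%:~R * e (-2) (4, -6) + (8)%:~R * e (-2) (5, -7)) - ((-9)%:~R * e (1) (7, -6) + (2)%:~R * e (1) (5, -4)))) + (405)%:~R * ((4)%:~R * e (0) (4, -4) - (((0)%:~R * e (-2) (2, -4) + (8)%:~R * e (-2) (4, -6)) - ((-8)%:~R * e (2) (6, -4) + (0)%:~R * e (2) (4, -2)))) + (-960)%:~R * ((4)%:~R * e (0) (5, -5) - (((-1)%:~R * e (-2) (3, -5) + (9)%:~R * e (-2) (5, -7)) - ((-9)%:~R * e (2) (7, -5) + (1)%:~R * e (2) (5, -3)))) + (96)%:~R * e (1) (3, -2) + (288)%:~R * e (-1) (3, -4) + (288)%:~R * e (1) (4, -3) + (-3280)%:~R * e (-1) (4, -5) + (-3240)%:~R * e (1) (6, -5) + (9720)%:~R * e (-1) (6, -7) + (96)%:~R * e (-1) (2, -3) + (-32)%:~R * e (1) (2, -1) + (-3280)%:~R * e (1) (5, -4) + (-3240)%:~R * e (-1) (5, -6) + (9720)%:~R * e (1) (7, -6) + (-1620)%:~R * e (0) (4, -4) + (3840)%:~R * e (0) (5, -5) by ring.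
have ee1 : e (-1) (1, -2) = 0.
have gen : forall y1 y2 y3 y4 y5 y6 y7 y8 w0 w1 w2 w3 w4 w5 w6 w7 w8 w9 w10 w11 w12 : CC, y1 = 0 -> y2 = 0 -> y3 = 0 -> y4 = 0 -> y5 = 0 -> y6 = 0 -> y7 = 0 -> y8 = 0 -> w0 = 0 -> w1 = 0 -> w2 = 0 -> w3 = 0 -> w4 = 0 -> w5 = 0 -> w6 = 0 -> w7 = 0 -> w8 = 0 -> w9 = 0 -> w10 = 0 -> w11 = 0 -> w12 = 0 -> (-32)%:~R * y1 + (-160)%:~R * y2 + (1080)%:~R * y3 + (-32)%:~R * y4 + (-160)%:~R * y5 + (1080)%:~R * y6 + (405)%:~R * y7 + (-960)%:~R * y8 + (96)%:~R * w0 + (288)%:~R * w1 + (288)%:~R * w2 + (-3280)%:~R * w3 + (-3240)%:~R * w4 + (9720)%:~R * w5 + (96)%:~R * w6 + (-32)%:~R * w7 + (-3280)%:~R * w8 + (-3240)%:~R * w9 + (9720)%:~R * w10 + (-1620)%:~R * w11 + (3840)%:~R * w12 = 0.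
  move=> y1 y2 y3 y4 y5 y6 y7 y8 w0 w1 w2 w3 w4 w5 w6 w7 w8 w9 w10 w11 w12 Y1 Y2 Y3 Y4 Y5 Y6 Y7 Y8 G0 G1 G2 G3 G4 G5 G6 G7 G8 G9 G10 G11 G12; subst; ring.
have X1 : (3)%:~R * e (1) (3, -2) - (((1)%:~R * e (-1) (1, -2) + (6)%:~R * e (-1) (3, -4)) - ((-5)%:~R * e (2) (4, -2) + (0)%:~R * e (2) (3, -1))) = 0 by apply/eqP; rewrite subr_eq0; apply/eqP; exact: E1.
have X2 : (3)%:~R * e (1) (4, -3) - (((0)%:~R * e (-1) (2, -3) + (7)%:~R * e (-1) (4, -5)) - ((-6)%:~R * e (2) (5, -3) + (1)%:~R * e (2) (4, -2))) = 0 by apply/eqP; rewrite subr_eq0; apply/eqP; exact: E2.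
have X3 : (3)%:~R * e (1) (6, -5) - (((-2)%:~R * e (-1) (4, -5) + (9)%:~R * e (-1) (6, -7)) - ((-8)%:~R * e (2) (7, -5) + (3)%:~R * e (2) (6, -4))) = 0 by apply/eqP; rewrite subr_eq0; apply/eqP; exact: E3.
have X4 : (3)%:~R * e (-1) (2, -3) - (((0)%:~R * e (-2) (1, -3) + (5)%:~R * e (-2) (2, -4)) - ((-6)%:~R * e (1) (4, -3) + (-1)%:~R * e (1) (2, -1))) = 0 by apply/eqP; rewrite subr_eq0; apply/eqP; exact: E4.
have X5 : (3)%:~R * e (-1) (3, -4) - (((-1)%:~R * e (-2) (2, -4) + (6)%:~R * e (-2) (3, -5)) - ((-7)%:~R * e (1) (5, -4) + (0)%:~R * e (1) (3, -2))) = 0 by apply/eqP; rewrite subr_eq0; apply/eqP; exact: E5.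
have X6 : (3)%:~R * e (-1) (5, -6) - (((-3)%:~R * e (-2) (4, -6) + (8)%:~R * e (-2) (5, -7)) - ((-9)%:~R * e (1) (7, -6) + (2)%:~R * e (1) (5, -4))) = 0 by apply/eqP; rewrite subr_eq0; apply/eqP; exact: E6.
have X7 : (4)%:~R * e (0) (4, -4) - (((0)%:~R * e (-2) (2, -4) + (8)%:~R * e (-2) (4, -6)) - ((-8)%:~R * e (2) (6, -4) + (0)%:~R * e (2) (4, -2))) = 0 by apply/eqP; rewrite subr_eq0; apply/eqP; exact: E7.
have X8 : (4)%:~R * e (0) (5, -5) - (((-1)%:~R * e (-2) (3, -5) + (9)%:~R * e (-2) (5, -7)) - ((-9)%:~R * e (2) (7, -5) + (1)%:~R * e (2) (5, -3))) = 0 by apply/eqP; rewrite subr_eq0; apply/eqP; exact: E8.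
apply: (@mulIz 32) => //; apply: (etrans key).
exact: (gen _ _ _ _ _ _ _ _ _ _ _ _ _ _ _ _ _ _ _ _ _ X1 X2 X3 X4 X5 X6 X7 X8 (H1 (3, -2)) z3 (H1 (4, -3)) z4 (H1 (6, -5)) z6 z2 (H1 (2, -1)) (H1 (5, -4)) z5 (H1 (7, -6)) (H0 (4, -4)) (H0 (5, -5))).
have Zm1 : forall p, e (-1) p = 0 := K2 (Ha (-1)) (Hh (-1)) A1m ee1.
have Z2 : forall p, e 2 p = 0.
  apply: K3 => // p.
  have E : (2 - -1)%:~R * e 1 p = Aop 2 (e (-1)) p - Aop (-1) (e 2) p := HC 2 (-1) p.
  by move: E; rewrite H1 mulr0 (Aop_zero _ _ Zm1) sub0r => /eqP; rewrite eq_sym oppr_eq0 => /eqP.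
have Zm2 : forall p, e (-2) p = 0.
  apply: K4 => // p.
  have E : (1 - -2)%:~R * e (-1) p = Aop 1 (e (-2)) p - Aop (-2) (e 1) p := HC 1 (-2) p.
  by move: E; rewrite Zm1 mulr0 (Aop_zero _ _ H1) subr0.
have Up : forall m, 2 <= m -> forall p, e m p = 0.
  apply: int_ind_up => // i hi IH p.
  have := HC (i - 1) 1 p; rewrite subrK (Aop_zero _ _ H1) (Aop_zero _ _ IH) subrr => E.
  by apply: (@mulIz (i - 1 - 1)) => //; lia.
have Dn : forall m, 2 <= m -> forall p, e (- m) p = 0.
  apply: int_ind_up => // i hi IH p.
  have := HC (- (i - 1)) (-1) p.
  rewrite (_ : - (i - 1) + -1 = - i); last by lia.
  rewrite (Aop_zero _ _ Zm1) (Aop_zero _ _ IH) subrr => E.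
  by apply: (@mulIz (- (i - 1) - -1)) => //; lia.
move=> m p.
have [hm|hm] := boolP (2 <= m); first exact: Up.
have [hm'|hm'] := boolP (m <= -2).
  by rewrite -(opprK m) Dn //; lia.
have : (m == -1) || (m == 0) || (m == 1) by lia.
by case/orP => [/orP[]|] /eqP ->.
Qed.

Fixpoint sn (d : Fn) (n : nat) : CC :=
  match n with
  | 0 => 0
  | n'.+1 => (d (n'.+1%:Z, - n'%:Z) - (2 - n'.+1%:Z)%:~R * sn d n') / (n'.+2%:Z)%:~R
  end.

Definition sig (d : Fn) (i : int) : CC :=
  match i with Posz n => sn d n | Negz n => - sn d n.+1 end.

Definition Rsig (d : Fn) (p : int * int) : CC := if p.1 + p.2 == 0 then sig d p.1 else 0.

Lemma snS (d : Fn) n : (n.+2%:Z)%:~R * sn d n.+1 = d (n.+1%:Z, - n%:Z) - (2 - n.+1%:Z)%:~R * sn d n.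
Proof.
rewrite /= mulrC -mulrA mulVf ?mulr1 //.
by apply: intr_neq0; lia.
Qed.

Lemma sig_eq (d : Fn) : antis d -> forall i,
  (2 * 1 - i)%:~R * sig d (i - 1) + (2 * 1 - (1 - i))%:~R * sig d i = d (i, 1 - i).
Proof.
move=> Ha [n|n].
- case: n => [|n].
    have s0 : sig d (Posz 0) = 0 by [].
    have sm1 : sig d (Posz 0 - 1) = - sn d 1 by [].
    rewrite sm1 s0 mulr0 addr0 Ha.
    have E := snS d 0; rewrite (_ : sn d 0 = 0) // mulr0 subr0 in E.
    rewrite (_ : d (1 - Posz 0, Posz 0) = d (1%:Z, - 0%:Z)) // -E; ring.
  have s1 : sig d (Posz n.+1 - 1) = sn d n by rewrite (_ : Posz n.+1 - 1 = Posz n) //; lia.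
  have s2 : sig d (Posz n.+1) = sn d n.+1 by [].
  rewrite s1 s2.
  rewrite (_ : d (Posz n.+1, 1 - Posz n.+1) = d (n.+1%:Z, - n%:Z)); last by congr d; congr pair; lia.
  have E := snS d n.
  rewrite (_ : d (n.+1%:Z, - n%:Z) = (n.+2%:Z)%:~R * sn d n.+1 + (2 - n.+1%:Z)%:~R * sn d n); last by rewrite E subrK.
  rewrite (_ : (2 * 1 - (1 - Posz n.+1)) = n.+2%:Z); last by lia.
  rewrite (_ : (2 * 1 - Posz n.+1) = 2 - n.+1%:Z); last by lia.
  by rewrite addrC.
- have s1 : sig d (Negz n - 1) = - sn d n.+2.
    by rewrite (_ : Negz n - 1 = Negz n.+1) //; rewrite !NegzE; lia.
  have s2 : sig d (Negz n) = - sn d n.+1 by [].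
  rewrite s1 s2 Ha.
  have E := snS d n.+1.
  rewrite (_ : d (1 - Negz n, Negz n) = d (n.+2%:Z, - n.+1%:Z)); last by congr d; congr pair; rewrite NegzE; lia.
  rewrite (_ : d (n.+2%:Z, - n.+1%:Z) = (n.+3%:Z)%:~R * sn d n.+2 + (2 - n.+2%:Z)%:~R * sn d n.+1); last by rewrite E subrK.
  rewrite (_ : (2 * 1 - Negz n) = n.+3%:Z); last by rewrite NegzE; lia.
  rewrite (_ : (2 * 1 - (1 - Negz n)) = - n%:Z); last by rewrite NegzE; lia.
  ring.
Qed.

Lemma sig_odd (d : Fn) i : sig d (- i) = - sig d i.
Proof.
case: i => [[|n]|n].
- by rewrite /= oppr0.
- by [].
- by rewrite [in RHS]/sig opprK.
Qed.

Lemma Rsig_antis (d : Fn) : antis (Rsig d).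
Proof.
move=> i j; rewrite /Rsig /= addrC.
case: eqP => [h|_]; last by rewrite oppr0.
by rewrite (_ : i = - j) ?sig_odd ?opprK //; lia.
Qed.

Lemma Rsig_homog (d : Fn) : homog 0 (Rsig d).
Proof. by move=> p /negbTE h; rewrite /Rsig h. Qed.

Lemma Rsig_A1 (d : Fn) : antis d -> homog 1 d -> forall p, Aop 1 (Rsig d) p = d p.
Proof.
move=> Ha Hh [i j].
have [/eqP hij|hij] := boolP (i + j == 1); last first.
  rewrite Hh // /Aop /Rsig /=.
  rewrite (_ : (i - 1 + j == 0) = false); last by apply/negbTE; lia.
  rewrite (_ : (i + (j - 1) == 0) = false); last by apply/negbTE; lia.
  by rewrite !mulr0 addr0.
have -> : j = 1 - i by lia.
rewrite -(sig_eq Ha) /Aop /Rsig /=.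
rewrite (_ : (i - 1 + (1 - i) == 0)); last by apply/eqP; lia.
rewrite (_ : (i + (1 - i - 1) == 0)); last by apply/eqP; lia.
done.
Qed.

Lemma Aop0_homog0 (f : Fn) p : homog 0 f -> Aop 0 f p = 0.
Proof.
move=> H; rewrite Aop0; case: p => i j /=.
have [/eqP h|h] := boolP (i + j == 0); first by rewrite h mulr0z oppr0 mul0r.
by rewrite H // mulr0.
Qed.

Definition out (N : int) (p : int * int) : bool :=
  (p.1 < - N) || (N < p.1) || (p.2 < - N) || (N < p.2).

Definition R1of (t : Fn) (p : int * int) : CC :=
  if p.1 + p.2 == 0 then 0 else - t p / (p.1 + p.2)%:~R.

Lemma R1_antis (t : Fn) : antis t -> antis (R1of t).
Proof.
move=> Ha i j; rewrite /R1of /= (addrC j i).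
case: eqP => _; first by rewrite oppr0.
rewrite Ha; ring.
Qed.

Lemma R1_A0 (t : Fn) p : p.1 + p.2 != 0 -> Aop 0 (R1of t) p = t p.
Proof.
move=> h; have hs := intr_neq0 h.
rewrite Aop0 /R1of (negbTE h).
move: (t p) ((p.1 + p.2)%:~R : CC) hs => a b hb.
by rewrite mulNr mulrCA mulfV // mulr1 opprK.
Qed.

Lemma D'0_homog (D : int -> Fn) p : p.1 + p.2 != 0 -> D 0 p - Aop 0 (R1of (D 0)) p = 0.
Proof. by move=> h; rewrite R1_A0 // subrr. Qed.

Lemma aux1 (a c : CC) (k : int) : k = 1 -> (1 - 0)%:~R * c = a - (- k%:~R * c) -> a = 0.
Proof.
move=> -> /eqP; rewrite eq_sym subr_eq => /eqP ->; ring.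
Qed.

Lemma fun_main (D : int -> Fn) (B : int) : cocyc D -> (forall m, antis (D m)) ->
  (forall p, out B p -> D 0 p = 0) -> (forall p, out B p -> D 1 p = 0) ->
  (forall p, out B p -> D 2 p = 0) ->
  exists R : Fn, antis R /\ (forall m p, D m p = Aop m R p) /\ (forall p, out (B + 3) p -> R p = 0).
Proof.
move=> HC Ha hB0 hB1 hB2.
pose R1 := R1of (D 0).
have aR1 : antis R1 := R1_antis (Ha 0).
pose D' := fun m p => D m p - Aop m R1 p.
have HC' : cocyc D' := cocycB HC (cocyc_cob R1).
have Ha' : forall m, antis (D' m) := fun m => antisB (Ha m) (antisA m aR1).
have h0 : homog 0 (D' 0) by move=> p h; exact: D'0_homog.
have Z0 : forall p, D' 0 p = 0.
  apply: K1 => //; case=> i j.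
  have [/eqP hij|hij] := boolP (i + j == 1); last first.
    rewrite /Aop !h0 ?mulr0 ?addr0 //=; lia.
  have E : (1 - 0)%:~R * D' 1 (i, j) = Aop 1 (D' 0) (i, j) - Aop 0 (D' 1) (i, j) := HC' 1 0 (i, j).
  rewrite Aop0 /= in E.
  exact: (aux1 hij E).
have Hh' := cocyc_homog HC' Z0.
pose d := D' 1.
pose Rs := Rsig d.
pose e := fun m p => D' m p - Aop m Rs p.
have HCe : cocyc e := cocycB HC' (cocyc_cob Rs).
have Hae : forall m, antis (e m) := fun m => antisB (Ha' m) (antisA m (@Rsig_antis d)).
have e0 : forall p, e 0 p = 0.
  by move=> p; rewrite /e Z0 (Aop0_homog0 _ (@Rsig_homog d)) subrr.
have e1 : forall p, e 1 p = 0.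
  by move=> p; rewrite /e (Rsig_A1 (Ha' 1) (Hh' 1)) subrr.
have Ze := deg0_zero HCe Hae e0 e1.
have D'E : forall m p, D' m p = Aop m Rs p.
  by move=> m p; apply/eqP; rewrite -subr_eq0; apply/eqP; exact: Ze.
exists (fun p => R1 p + Rs p); split; first exact: (antisD aR1 (@Rsig_antis d)).
split.
  move=> m p; rewrite AopD -D'E /D'; ring.
have R1z : forall q, out B q -> R1 q = 0.
  by move=> q hq; rewrite /R1 /R1of hB0 // oppr0 mul0r; case: ifP.
have D'z1 : forall q, out (B + 2) q -> D' 1 q = 0.
  move=> [i j] hq; rewrite /D' hB1 ?sub0r /Aop /= ?R1z ?mulr0 ?addr0 ?oppr0 //;
  move: hq; rewrite /out /=; lia.
have D'z2 : forall q, out (B + 2) q -> D' 2 q = 0.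
  move=> [i j] hq; rewrite /D' hB2 ?sub0r /Aop /= ?R1z ?mulr0 ?addr0 ?oppr0 //;
  move: hq; rewrite /out /=; lia.
move=> [i j] hq; rewrite R1z /=; last by move: hq; rewrite /out /=; lia.
rewrite add0r /Rs /Rsig /=.
case: eqP => [hij|]; last by [].
have hj : j = - i by lia.
have S1 := sig_eq (Ha' 1) i.
have S2 := sig_eq (Ha' 1) (i - 1).
have S3 := D'E 2 (i, 2 - i).
rewrite /Aop /Rs /Rsig /= in S3.
rewrite (_ : i - 2 + (2 - i) == 0) in S3; last by apply/eqP; lia.
rewrite (_ : i + (2 - i - 2) == 0) in S3; last by apply/eqP; lia.
rewrite D'z1 in S1; last by move: hq; rewrite /out /= hj; lia.
rewrite D'z1 in S2; last by move: hq; rewrite /out /= hj; lia.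
rewrite D'z2 in S3; last by move: hq; rewrite /out /= hj; lia.
rewrite (_ : i - 1 - 1 = i - 2) in S2; last by lia.
apply: (@mulIz 12) => //.
move: S1 S2 S3; move: (sig d (i - 2)) (sig d (i - 1)) (sig d i) => a b c S1 S2 S3.
have -> : (12%:~R : CC) * c = (4 - i)%:~R * (i%:~R * ((2 * 1 - i)%:~R * b + (2 * 1 - (1 - i))%:~R * c)
   - (2 - i)%:~R * ((2 * 1 - (i - 1))%:~R * a + (2 * 1 - (1 - (i - 1)))%:~R * b))
   + (2 - i)%:~R * (3 - i)%:~R * ((2 * 2 - i)%:~R * a + (2 * 2 - (2 - i))%:~R * c) by ring.
by rewrite S1 S2 -S3 !mulr0 subrr addr0 mulr0.
Qed.

Lemma cZ (c : CC) (t : Tens) p : (c *: t)@_p = c * t@_p.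
Proof. exact: mcoeffZ. Qed.
Lemma cD (t u : Tens) p : (t + u)@_p = t@_p + u@_p.
Proof. exact: mcoeffD. Qed.
Lemma cB (t u : Tens) p : (t - u)@_p = t@_p - u@_p.
Proof. exact: mcoeffB. Qed.
Lemma c0 p : (0 : Tens)@_p = 0.
Proof. exact: mcoeff0. Qed.
Lemma cS (I : Type) (s : seq I) (F : I -> Tens) p :
  (\sum_(i <- s) F i)@_p = \sum_(i <- s) (F i)@_p.
Proof. exact: raddf_sum. Qed.
Lemma cU (c : CC) q p : (<< c *g q >> : Tens)@_p = c * (q == p)%:R.
Proof. by rewrite mcoeffU mulr_natr. Qed.
Lemma wZ (c : CC) (t : Witt) p : (c *: t)@_p = c * t@_p.
Proof. exact: mcoeffZ. Qed.
Lemma wD (t u : Witt) p : (t + u)@_p = t@_p + u@_p.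
Proof. exact: mcoeffD. Qed.
Lemma wS (I : Type) (s : seq I) (F : I -> Witt) p :
  (\sum_(i <- s) F i)@_p = \sum_(i <- s) (F i)@_p.
Proof. exact: raddf_sum. Qed.
Lemma wU (c : CC) q p : (<< c *g q >> : Witt)@_p = c * (q == p)%:R.
Proof. by rewrite mcoeffU mulr_natr. Qed.

Lemma sum_msupp_ind (K : choiceType) (t : {malg CC[K]}) (q : K) (G : K -> CC) :
  \sum_(p <- msupp t) t@_p * (G p * (p == q)%:R) = t@_q * G q.
Proof.
have [qin|qout] := boolP (q \in msupp t).
  rewrite (big_fsetD1 q) //= eqxx mulr1 big1_fset ?addr0 // => p.
  by rewrite in_fsetD1 => /andP[/negbTE -> _] _; rewrite mulr0 mulr0.
rewrite mcoeff_outdom // mul0r big1_fset // => p pin _.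
have -> : (p == q) = false by apply/negbTE; apply: contraNneq qout => <-.
by rewrite mulr0 mulr0.
Qed.

Lemma LE m k : (L m)@_k = (m == k)%:R.
Proof. by rewrite /L wU mul1r. Qed.

Lemma msuppL m : msupp (L m) = [fset m]%fset.
Proof. by rewrite /L msuppU oner_eq0. Qed.

Fact tk : unit. Proof. exact: tt. Qed.
Definition tens := locked_with tk tensor.
Lemma tensE : tensor = tens. Proof. by rewrite /tens unlock. Qed.

Lemma tensorE (a b : Witt) p : (tens a b)@_p = a@_(p.1) * b@_(p.2).
Proof.
rewrite -tensE /tensor cS /=.
under eq_bigr => m _ do rewrite cS /=.
under eq_bigr => m _ do under eq_bigr => n _ do rewrite cU.
case: p => i j /=.
have E : forall m n : int, ((m, n) == (i, j)) = (n == j) && (m == i).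
  by move=> m n; rewrite xpair_eqE andbC.
under eq_bigr => m _ do under eq_bigr => n _ do rewrite E -mulnb natrM.
have F : forall m n, a@_m * b@_n * ((n == j)%:R * (m == i)%:R) =
   b@_n * ((a@_m * (m == i)%:R) * (n == j)%:R) :> CC by move=> m n; ring.
under eq_bigr => m _ do under eq_bigr => n _ do rewrite F.
under eq_bigr => m _ do rewrite (sum_msupp_ind b j (fun _ => a@_m * (m == i)%:R)).
have G : forall m, b@_j * (a@_m * (m == i)%:R) = a@_m * (b@_j * (m == i)%:R) :> CC by move=> m; ring.
under eq_bigr => m _ do rewrite G.
by rewrite (sum_msupp_ind a i (fun _ => b@_j)).
Qed.

Lemma tensor_ext (a b : Witt) (t : Tens) : (forall p, t@_p = a@_(p.1) * b@_(p.2)) -> tens a b = t.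
Proof. by move=> H; apply/malgP => p; rewrite tensorE H. Qed.

Lemma tensorDl (a1 a2 : Witt) (c : CC) (b : Witt) : tens (c *: a1 + a2) b = c *: tens a1 b + tens a2 b.
Proof.
apply: tensor_ext => p; rewrite cD cZ (tensorE a1) (tensorE a2).
by rewrite wD wZ mulrDl mulrA.
Qed.

Lemma tensorDr (a b1 b2 : Witt) (c : CC) : tens a (c *: b1 + b2) = c *: tens a b1 + tens a b2.
Proof.
apply: tensor_ext => p; rewrite cD cZ (tensorE a b1) (tensorE a b2).
by rewrite wD wZ mulrDr mulrCA.
Qed.

Definition brk := locked_with tk bracket.
Lemma brkE : bracket = brk. Proof. by rewrite /brk unlock. Qed.
Definition Lk := locked_with tk L.
Lemma LkE : L = Lk. Proof. by rewrite /Lk unlock. Qed.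
Definition actk := locked_with tk act.
Lemma actkE : act = actk. Proof. by rewrite /actk unlock. Qed.

Lemma LkC m k : (Lk m)@_k = (m == k)%:R.
Proof. by rewrite -LkE LE. Qed.
Lemma msuppLk m : msupp (Lk m) = [fset m]%fset.
Proof. by rewrite -LkE msuppL. Qed.

Lemma actE (x : Witt) (t : Tens) : actk x t = \sum_(p <- msupp t)
     t@_p *: (tens (brk x (Lk p.1)) (Lk p.2) + tens (Lk p.1) (brk x (Lk p.2))).
Proof. by rewrite -actkE -brkE -tensE -LkE. Qed.

Lemma msum_incl (V : lmodType CC) (x : Witt) (d : {fset int}) (F : int -> V) :
  (msupp x `<=` d)%fset ->
  \sum_(m <- msupp x) x@_m *: F m = \sum_(m <- d) x@_m *: F m.
Proof.
move=> sub; apply: big_fset_incl => // m _ mx.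
by rewrite mcoeff_outdom // scale0r.
Qed.

Lemma msum_lin (V : lmodType CC) (F : int -> V) (c : CC) (x y : Witt) :
  \sum_(m <- msupp (c *: x + y)) (c *: x + y)@_m *: F m =
  c *: (\sum_(m <- msupp x) x@_m *: F m) + \sum_(m <- msupp y) y@_m *: F m.
Proof.
pose d := (msupp x `|` msupp y `|` msupp (c *: x + y))%fset.
rewrite (msum_incl (x := c *: x + y) (d := d) F); last by rewrite /d fsubsetUr.
rewrite (msum_incl (x := x) (d := d) F); last by rewrite /d -fsetUA fsubsetUl.
rewrite (msum_incl (x := y) (d := d) F); last first.
  by rewrite /d -fsetUA (fsetUC (msupp y)) fsetUA fsubsetUr.
rewrite scaler_sumr -big_split /=; apply: eq_bigr => m _.
by rewrite wD wZ scalerDl scalerA.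
Qed.

Lemma bracketL1 (m : int) (y : Witt) :
  brk (Lk m) y = \sum_(n <- msupp y) (y@_n * (m - n)%:~R) *: Lk (m + n).
Proof.
Time rewrite -brkE -LkE.
Time rewrite /bracket msuppL big_seq_fset1.
apply: eq_bigr => n _.
by rewrite LE eqxx mulr1n mul1r.
Qed.

Lemma bracketLL (m n : int) : brk (Lk m) (Lk n) = (m - n)%:~R *: Lk (m + n).
Proof. by rewrite bracketL1 msuppLk big_seq_fset1 LkC eqxx mulr1n mul1r. Qed.

Lemma bracket_lin (x y : Witt) : brk x y = \sum_(m <- msupp x) x@_m *: brk (Lk m) y.
Proof.
rewrite -brkE /bracket; apply: eq_bigr => m _.
rewrite -LkE msuppL big_seq_fset1 scaler_sumr; apply: eq_bigr => n _.
by rewrite scalerA LE eqxx mulr1n mul1r mulrA.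
Qed.

Lemma bracketDl (c : CC) (x1 x2 y : Witt) : brk (c *: x1 + x2) y = c *: brk x1 y + brk x2 y.
Proof. by rewrite !(bracket_lin _ y) msum_lin. Qed.

Lemma lin_decomp (V : lmodType CC) (f : Witt -> V) :
  (forall c x y, f (c *: x + y) = c *: f x + f y) ->
  forall x, f x = \sum_(m <- msupp x) x@_m *: f (Lk m).
Proof.
move=> H x.
have f0 : f 0 = 0.
  have E := H 1 0 0; rewrite !scale1r addr0 in E.
  by apply: (addrI (f 0)); rewrite addr0 -E.
have fs : forall (s : seq int) (a : int -> CC),
    f (\sum_(m <- s) a m *: Lk m) = \sum_(m <- s) a m *: f (Lk m).
  move=> s a; elim: s => [|k s IH]; first by rewrite !big_nil f0.
  by rewrite !big_cons H IH.
rewrite {1}(monalgE x) -fs; congr f; apply: eq_bigr => m _.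
by apply/malgP => k; rewrite wU wZ LkC.
Qed.

Lemma lmod_aux (V : lmodType CC) (e c : CC) (A B C D : V) :
  e *: (c *: A + B + (c *: C + D)) = c *: (e *: (A + C)) + e *: (B + D).
Proof. by rewrite !scalerDr !scalerA [c * _]mulrC addrACA. Qed.

Lemma act_lin (c : CC) (x1 x2 : Witt) (t : Tens) : actk (c *: x1 + x2) t = c *: actk x1 t + actk x2 t.
Proof.
rewrite !actE scaler_sumr -big_split /=; apply: eq_bigr => p _.
rewrite (bracketDl c x1 x2 (Lk p.1)) (bracketDl c x1 x2 (Lk p.2)).
rewrite (tensorDl (brk x1 (Lk p.1)) (brk x2 (Lk p.1)) c (Lk p.2)).
rewrite (tensorDr (Lk p.1) (brk x1 (Lk p.2)) (brk x2 (Lk p.2)) c).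
move: (tens (brk x1 (Lk p.1)) (Lk p.2)) (tens (brk x2 (Lk p.1)) (Lk p.2))
  (tens (Lk p.1) (brk x1 (Lk p.2))) (tens (Lk p.1) (brk x2 (Lk p.2))) (t@_p) => A B C D e.
exact: lmod_aux.
Qed.

Lemma act_decomp (x : Witt) (t : Tens) : actk x t = \sum_(m <- msupp x) x@_m *: actk (Lk m) t.
Proof. exact: (@lin_decomp _ (fun x => actk x t) (fun c y z => act_lin c y z t)). Qed.

Lemma actLE (m : int) (t : Tens) p : (actk (Lk m) t)@_p = Aop m (fun q => t@_q) p.
Proof.
case: p => i j; rewrite actE cS /Aop /=.
have E1 : forall q : int * int, ((m + q.1 == i) && (q.2 == j)) = (q == (i - m, j)).
  by case=> a b /=; rewrite xpair_eqE; congr andb; apply/eqP/eqP; lia.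
have E2 : forall q : int * int, ((q.1 == i) && (m + q.2 == j)) = (q == (i, j - m)).
  by case=> a b /=; rewrite xpair_eqE; congr andb; apply/eqP/eqP; lia.
have H : forall q : int * int, (t@_q *: (tens (brk (Lk m) (Lk q.1)) (Lk q.2) +
     tens (Lk q.1) (brk (Lk m) (Lk q.2))))@_(i, j) =
   t@_q * ((m - q.1)%:~R * (q == (i - m, j))%:R) +
   t@_q * ((m - q.2)%:~R * (q == (i, j - m))%:R).
  move=> q; rewrite cZ cD (bracketLL m q.1) (bracketLL m q.2).
  rewrite (tensorE ((m - q.1)%:~R *: Lk (m + q.1)) (Lk q.2)).
  rewrite (tensorE (Lk q.1) ((m - q.2)%:~R *: Lk (m + q.2))) /=.
  rewrite !wZ !LkC -E1 -E2 /=.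
  move: (m + q.1 == i) (q.2 == j) (q.1 == i) (m + q.2 == j) => [] [] [] [] /=; ring.
under eq_bigr => q _ do rewrite H.
rewrite big_split /= !sum_msupp_ind /=.
have e1 : (m - (i - m)) = 2 * m - i by lia.
have e2 : (m - (j - m)) = 2 * m - j by lia.
by rewrite e1 e2 mulrC [_ * t@_(i, j - m)]mulrC.
Qed.


Lemma wedgeE (a b : Witt) p : (wedge a b)@_p = a@_(p.1) * b@_(p.2) - b@_(p.1) * a@_(p.2).
Proof. by rewrite /wedge tensE cB (tensorE a b) (tensorE b a). Qed.

Lemma ext2_antis (t : Tens) : in_ext2 t -> antis (fun p => t@_p).
Proof.
move=> [s ->] i j; rewrite !cS -sumrN; apply: eq_bigr => q _.
rewrite !wedgeE /=; ring.
Qed.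

Lemma seq_bound (s : seq (int * int)) :
  exists B : int, 0 <= B /\ forall q, q \in s -> ~~ out B q.
Proof.
elim: s => [|q s [B [B0 HB]]]; first by exists 0.
exists (B + `|q.1| + `|q.2|); split; first by lia.
move=> q'; rewrite in_cons => /orP[/eqP ->|/HB]; rewrite /out; lia.
Qed.

Lemma tens_bound (t : Tens) : exists B : int, 0 <= B /\ forall p, out B p -> t@_p = 0.
Proof.
have [B [B0 HB]] := seq_bound (msupp t); exists B; split => // p hp.
apply: mcoeff_outdom; apply: contraL hp; exact: HB.
Qed.

Definition rng (N : int) : seq int := [seq (k%:Z - N) | k <- iota 0 (`|N|%N * 2 + 1)].

Lemma rng_uniq N : uniq (rng N).
Proof.
rewrite map_inj_uniq ?iota_uniq // => a b H; lia.
Qed.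

Lemma mem_rng N i : 0 <= N -> (i \in rng N) = (- N <= i <= N).
Proof.
move=> N0; apply/mapP/idP => [[k]|hi].
  by rewrite mem_iota => hk ->; lia.
exists (absz (i + N)); first by rewrite mem_iota; lia.
lia.
Qed.

Lemma sum_ind_seq (s : seq int) (F : int -> CC) i : uniq s ->
  \sum_(a <- s) F a * (a == i)%:R = if i \in s then F i else 0.
Proof.
elim: s => [|x s IH] /=; first by rewrite big_nil.
move=> /andP[xs us]; rewrite big_cons IH // in_cons.
have [<-|nx] := eqVneq x i; first by rewrite (negbTE xs) mulr1 addr0.
by rewrite mulr0 add0r.
Qed.

Lemma dsum (s : seq int) (G : int -> int -> CC) i j : uniq s ->
  \sum_(a <- s) \sum_(b <- s) G a b * ((a == i)%:R * (b == j)%:R) =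
  if (i \in s) && (j \in s) then G i j else 0.
Proof.
move=> us.
have E : forall a, \sum_(b <- s) G a b * ((a == i)%:R * (b == j)%:R) =
   (if j \in s then G a j else 0) * (a == i)%:R.
  move=> a; rewrite -(sum_ind_seq (fun b => G a b) j us) big_distrl /=.
  by apply: eq_bigr => b _; ring.
rewrite (eq_bigr _ (fun a _ => E a)) sum_ind_seq //.
by case: (i \in s); case: (j \in s).
Qed.

Lemma build_r (R : Fn) (N : int) : 0 <= N -> antis R -> (forall p, out N p -> R p = 0) ->
  exists r : Tens, in_ext2 r /\ forall p, r@_p = R p.
Proof.
move=> N0 Ha HR.
pose r : Tens := \sum_(a <- rng N) \sum_(b <- rng N) << R (a, b) *g (a, b) >>.
have rE : forall p, r@_p = R p.
  case=> i j; rewrite /r cS.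
  under eq_bigr => a _ do rewrite cS.
  under eq_bigr => a _ do under eq_bigr => b _ do rewrite cU xpair_eqE -mulnb natrM.
  rewrite (dsum (fun a b => R (a, b))) ?rng_uniq //.
  case: ifP => //; rewrite !mem_rng // => h.
  by rewrite HR // /out /=; lia.
exists r; split => //.
exists [seq ((R (a, b) / 2) *: Lk a, Lk b) | a <- rng N, b <- rng N].
apply/malgP => [[i j]]; rewrite rE raddf_sum big_allpairs_dep /=.
under eq_bigr => a _ do under eq_bigr => b _ do rewrite wedgeE /= !wZ !LkC.
have E : forall a b : int,
   R (a, b) / 2 * (a == i)%:R * (b == j)%:R - (b == i)%:R * (R (a, b) / 2 * (a == j)%:R) =
   (R (a, b) / 2) * ((a == i)%:R * (b == j)%:R) - (R (a, b) / 2) * ((b == i)%:R * (a == j)%:R).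
  by move=> a b; ring.
under eq_bigr => a _ do under eq_bigr => b _ do rewrite E.
under eq_bigr => a _ do rewrite sumrB.
rewrite sumrB (dsum (fun a b => R (a, b) / 2)) ?rng_uniq //.
rewrite exchange_big /=.
rewrite (dsum (fun b a => R (a, b) / 2)) ?rng_uniq // andbC.
case: ifP => [_|]; last first.
  rewrite !mem_rng // => h; rewrite HR ?subrr // /out /=; lia.
rewrite (Ha j i); field; by rewrite ?pnatr_eq0 ?intr_eq0.
Qed.

Lemma coefE (c : CC) (t a b : Tens) p : c *: t = a - b -> c * t@_p = a@_p - b@_p.
Proof. by move=> E; rewrite -cZ E cB. Qed.

Theorem theorem1 :
  forall delta : {linear Witt -> Tens},
    (forall x : Witt, in_ext2 (delta x)) ->
    (forall x y : Witt,
        delta (bracket x y) = act x (delta y) - act y (delta x)) ->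
    exists r : Tens, in_ext2 r /\ (forall x : Witt, delta x = act x r).
Proof.
move=> delta Hin Hcoc.
pose D := fun (m : int) (p : int * int) => (delta (Lk m))@_p.
have HC : cocyc D.
  move=> m n p.
  have E := Hcoc (Lk m) (Lk n).
  rewrite brkE actkE bracketLL linearZ /= in E.
  have := coefE p E.
  by rewrite (actLE m (delta (Lk n)) p) (actLE n (delta (Lk m)) p).
have Ha : forall m, antis (D m) := fun m => ext2_antis (Hin (Lk m)).
have [B0 [B00 HB0]] := tens_bound (delta (Lk 0)).
have [B1 [B10 HB1]] := tens_bound (delta (Lk 1)).
have [B2 [B20 HB2]] := tens_bound (delta (Lk 2)).
pose B := B0 + B1 + B2.
have hB0 : forall p, out B p -> D 0 p = 0.
  by move=> p hp; apply: HB0; move: hp; rewrite /out /B; lia.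
have hB1 : forall p, out B p -> D 1 p = 0.
  by move=> p hp; apply: HB1; move: hp; rewrite /out /B; lia.
have hB2 : forall p, out B p -> D 2 p = 0.
  by move=> p hp; apply: HB2; move: hp; rewrite /out /B; lia.
have [R [aR [DR RB]]] := fun_main HC Ha hB0 hB1 hB2.
have B30 : 0 <= B + 3 by rewrite /B; lia.
have [r [rin rE]] := build_r B30 aR RB.
exists r; split => // x.
rewrite actkE act_decomp.
rewrite (@lin_decomp _ delta (fun c y z => linearP delta c y z) x).
apply: eq_bigr => m _; congr (_ *: _); apply/malgP => p.
rewrite (actLE m r p) -[LHS]/(D m p) DR.
by apply: Aop_ext => q; rewrite rE.
Qed.
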